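(* (a) Under the hypotheses of Theorem 4.3 (i.e. $2\le r\le m\le n$, $\mathbf u_1,\dots,\mathbf u_m\in F[t]^n$ of degree at most $k-1$ in $t$, written $\mathbf u_j=\sum_{l=0}^{k-1}\mathbf u_j^{(l)}t^l$, with all $r$-fold wedge products of the $\mathbf u_j$ vanishing modulo $t^k$ and $\mathbf u_1^{(0)}\wedge\dots\wedge\mathbf u_{r-1}^{(0)}\neq0$), for every $w$ with $0\le w<2k$ and every $1\le j_1<\dots<j_{r+1}\le m$, $$\sum_{\substack{l_1+\dots+l_{r+1}=w\\0\le l_i<k}}\mathbf u_{j_1}^{(l_1)}\wedge\dots\wedge\mathbf u_{j_r}^{(l_r)}\wedge\mathbf u_{j_{r+1}}^{(l_{r+1})}=0\quad\text{in }\textstyle\bigwedge^{r+1}F^n.$$ (b) In particular, for $3\le m\le n$ and $k\ge1$, at every point of the Zariski closure $Z_0$ in $\mathcal Z^{m,n}_{2,k}$ of the set of points at which some $x^{(0)}_{i,j}\neq0$, the rows satisfy, for all $0\le w<2k$ and all $1\le j_1<j_2<j_3\le m$, $$\sum_{\substack{l_1+l_2+l_3=w\\0\le l_1,l_2,l_3<k}}\mathbf u_{j_1}^{(l_1)}\wedge\mathbf u_{j_2}^{(l_2)}\wedge\mathbf u_{j_3}^{(l_3)}=0.$$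
   Context: Let $F$ be an algebraically closed field. For integers $1\le r\le m\le n$ and $k\ge 1$, let $S=F[x^{(l)}_{i,j}:1\le i\le m,\ 1\le j\le n,\ 0\le l\le k-1]$, the coordinate ring of $\mathbf A^{mnk}_F$, and let $X(t)$ be the $m\times n$ matrix over $S[t]/(t^k)$ with $(i,j)$ entry $x_{i,j}(t)=\sum_{l=0}^{k-1}x^{(l)}_{i,j}t^l$. $\mathcal I^{m,n}_{r,k}\subseteq S$ is the ideal generated by the coefficients of $t^l$, $0\le l\le k-1$, of all $r\times r$ minors of $X(t)$, and $\mathcal Z^{m,n}_{r,k}\subseteq\mathbf A^{mnk}_F$ is its zero set. For a point of $\mathbf A^{mnk}$, $\mathbf u_i^{(l)}=(x^{(l)}_{i,1},\dots,x^{(l)}_{i,n})\in F^n$ denotes its row of degree $l$. *)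

(* Defs.v *)
From HB Require Import structures.
From mathcomp Require Import all_boot all_order all_algebra.
From mathcomp Require Import mpoly.
Set Implicit Arguments.
Unset Strict Implicit.
Unset Printing Implicit Defensive.
Import GRing.Theory.
Local Open Scope ring_scope.

(* A point of A^{mnk}_F : x l is the m x n matrix (x^{(l)}_{i,j})_{i,j}.
   The row u_i^{(l)} is  row i (x l). *)
Definition point (F : fieldType) (m n k : nat) := 'I_k -> 'M[F]_(m, n).

Definition incr (p q : nat) (g : 'I_p -> 'I_q) : bool :=
  [forall a : 'I_p, forall b : 'I_p, (a < b)%N ==> (g a < g b)%N].

(* The p-fold wedge product v_0 /\ ... /\ v_{p-1} in /\^p F^n, given by its
   coordinates on the standard basis e_{g 0} /\ ... /\ e_{g (p-1)}, g strictly
   increasing (the coordinate is the p x p minor on columns g); the entries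
   at non-increasing g are set to 0. *)
Definition wedge (F : comRingType) (p n : nat) (v : 'I_p -> 'rV[F]_n)
  : {ffun {ffun 'I_p -> 'I_n} -> F} :=
  [ffun g : {ffun 'I_p -> 'I_n} =>
     if incr g then \det (\matrix_(a < p, b < p) v a 0 (g b)) else 0].

Definition Xt (F : fieldType) m n k (x : point F m n k) : 'M[{poly F}]_(m, n) :=
  \matrix_(i < m, j < n) \sum_(l < k) x l i j *: 'X^l.

Definition inZ (F : fieldType) (r m n k : nat) (x : point F m n k) : Prop :=
  forall (f : 'I_r -> 'I_m) (g : 'I_r -> 'I_n), incr f -> incr g ->
  forall l : nat, (l < k)%N ->
    (\det (\matrix_(a < r, b < r) Xt x (f a) (g b)))`_l = 0.

Definition flat (F : fieldType) m n k (x : point F m n k) : 'I_(k * (m * n)) -> F :=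
  fun idx => mxvec (\matrix_(l < k, c < m * n) mxvec (x l) 0 c) 0 idx.

Definition zclosure (F : fieldType) m n k (S : point F m n k -> Prop)
  : point F m n k -> Prop :=
  fun x => forall P : {mpoly F[k * (m * n)]},
    (forall y, S y -> P.@[flat y] = 0) -> P.@[flat x] = 0.

Definition Z0 (F : fieldType) m n k : point F m n k -> Prop :=
  fun x => inZ 2 x /\
    zclosure (fun y => inZ 2 y /\
       exists (l0 : 'I_k) (i : 'I_m) (j : 'I_n), (l0 : nat) = 0%N /\ y l0 i j != 0) x.

(* Main.v *)
Require Import Defs.
From HB Require Import structures.
From mathcomp Require Import all_boot all_order all_algebra.
From mathcomp Require Import mpoly.
From mathcomp Require Import fingroup perm zify.
Import GRing.Theory.
Local Open Scope ring_scope.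
Set Implicit Arguments.
Unset Strict Implicit.

Definition Mx (R : Type) m n (U : 'M[R]_(m, n)) q (f : 'I_q -> 'I_m)
  (g : 'I_q -> 'I_n) : 'M[R]_q := \matrix_(a, b) U (f a) (g b).

Lemma sort_exists q m (f : 'I_q -> 'I_m) : injective f ->
  exists s : 'S_q, incr (fun a => f (s a)).
Proof.
move=> finj.
pose S a := [set b | (f b < f a)%N].
have rk_lt a : (#|S a| < q)%N.
  have : S a \proper setT.
    by rewrite properT; apply/eqP => e; have := in_setT a; rewrite -e inE ltnn.
  by move/proper_card; rewrite cardsT card_ord.
have mono a a' : (f a < f a')%N -> (#|S a| < #|S a'|)%N.
  move=> lt; apply: proper_card; apply/properP; split.
    by apply/subsetP => b; rewrite !inE => /ltn_trans; apply.
  by exists a; rewrite !inE // ltnn.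
pose rk a := Ordinal (rk_lt a).
have rk_inj : injective rk.
  move=> a a' e; apply: finj; apply/eqP; move: e => /(congr1 val) /= e.
  have {}e : #|S a| = #|S a'| := e.
  case: (ltngtP (f a) (f a')) => [/mono|/mono|/val_inj->//]; by rewrite -e ltnn.
pose t := perm rk_inj.
exists t^-1%g; apply/forallP => a; apply/forallP => b; apply/implyP => ab.
case: (ltngtP (f (t^-1%g a)) (f (t^-1%g b))) => // [/mono|/val_inj/finj/perm_inj e].
  have ta x : #|S (t^-1%g x)| = x by have := congr1 val (permKV t x); rewrite permE.
  by rewrite !ta ltnNge ltnW.
by rewrite e ltnn in ab.
Qed.

Lemma det_row_perm (R : comPzRingType) q (A : 'M[R]_q) (s : 'S_q) :
  \det (row_perm s A) = (-1) ^+ s * \det A.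
Proof. by rewrite row_permE det_mulmx det_perm. Qed.

Lemma det_col_perm (R : comPzRingType) q (A : 'M[R]_q) (s : 'S_q) :
  \det (col_perm s A) = (-1) ^+ s * \det A.
Proof.
rewrite -det_tr tr_col_perm det_row_perm det_tr //.
Qed.

Lemma sign_inv (R : comPzRingType) q (s : 'S_q) x y :
  x = (-1) ^+ s * y -> y = (-1) ^+ s * (x : R).
Proof. by move->; rewrite mulrA -expr2 sqrr_sign mul1r. Qed.

Lemma inj_or_dup q m (f : 'I_q -> 'I_m) :
  injective f \/ exists a b, a != b /\ f a = f b.
Proof.
case: (boolP [exists a, exists b, (a != b) && (f a == f b)]).
  by move=> /existsP [a /existsP [b /andP [nab /eqP fab]]]; right; exists a, b.
move=> ne; left => a b e; apply/eqP; apply/negPn/negP => nab.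
by apply: (negP ne); apply/existsP; exists a; apply/existsP; exists b; rewrite nab e eqxx.
Qed.

Lemma dvd_gen (F : fieldType) m n q (U : 'M[{poly F}]_(m, n)) d :
  (forall (f : 'I_q -> 'I_m) (g : 'I_q -> 'I_n), incr f -> incr g ->
     d %| \det (Mx U f g)) ->
  forall (f : 'I_q -> 'I_m) (g : 'I_q -> 'I_n), d %| \det (Mx U f g).
Proof.
move=> H.
have H1 : forall (f : 'I_q -> 'I_m) (g : 'I_q -> 'I_n), incr g -> d %| \det (Mx U f g).
  move=> f g ig; case: (inj_or_dup f) => [fi|[a [b [nab fab]]]].
    have [s is_] := sort_exists fi.
    have := H _ _ is_ ig.
    have -> : Mx U (fun a => f (s a)) g = row_perm s (Mx U f g).
      by apply/matrixP => a b; rewrite !mxE.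
    move=> h; rewrite (sign_inv (det_row_perm (Mx U f g) s)); exact: dvdp_mull.
  rewrite (determinant_alternate nab) ?dvdp0 // => c.
  by rewrite !mxE fab.
move=> f g; case: (inj_or_dup g) => [gi|[a [b [nab gab]]]].
  have [s is_] := sort_exists gi.
  have := H1 f _ is_.
  have -> : Mx U f (fun a => g (s a)) = col_perm s (Mx U f g).
    by apply/matrixP => a b; rewrite !mxE.
  move=> h; rewrite (sign_inv (det_col_perm (Mx U f g) s)); exact: dvdp_mull.
rewrite -det_tr (determinant_alternate nab) ?dvdp0 // => c.
by rewrite !mxE gab.
Qed.


Definition ext T q (f : 'I_q -> T) (t : T) : 'I_q.+1 -> T :=
  fun a => if unlift ord_max a is Some a' then f a' else t.

Lemma ext_lift T q (f : 'I_q -> T) t a : ext f t (lift ord_max a) = f a.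
Proof. by rewrite /ext liftK. Qed.

Lemma ext_max T q (f : 'I_q -> T) t : ext f t ord_max = t.
Proof. by rewrite /ext unlift_none. Qed.

Lemma dvdp_sumP (F : fieldType) (I : finType) (P : pred I) (G : I -> {poly F}) d :
  (forall i, P i -> d %| G i) -> d %| \sum_(i | P i) G i.
Proof.
move=> H; apply: (big_ind (fun x => d %| x)); [exact: dvdp0 | exact: dvdp_add | exact: H].
Qed.

Lemma det_sum_rows (R : comPzRingType) q r (N : 'I_q -> 'I_r -> 'I_q -> R) :
  \det (\matrix_(a, b) \sum_(φ < r) N a φ b) =
  \sum_(Φ : {ffun 'I_q -> 'I_r}) \det (\matrix_(a, b) N a (Φ a) b).
Proof.
rewrite /determinant.
under eq_bigr => s _.
  rewrite (eq_bigr (fun a => \sum_(φ < r) N a φ (s a))); last by move=> a _; rewrite mxE.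
  rewrite bigA_distr_bigA mulr_sumr.
  over.
rewrite exchange_big /=; apply: eq_bigr => Φ _; apply: eq_bigr => s _.
by congr (_ * _); apply: eq_bigr => a _; rewrite mxE.
Qed.

Lemma det_two_prop (R : comPzRingType) q (A : 'M[R]_q) a a' (c c' : R)
  (w : 'I_q -> R) : a != a' -> (forall b, A a b = c * w b) ->
  (forall b, A a' b = c' * w b) -> \det A = 0.
Proof.
move=> naa Ha Ha'.
pose B := \matrix_(x, b) if x == a then w b else A x b.
pose B' := \matrix_(x, b) if x == a' then w b else B x b.
have e1 : \det A = c * \det B + 0 * \det B.
  apply: (determinant_multilinear (i0 := a)).
  - by apply/rowP => b; rewrite /B' /B !mxE eqxx Ha mul0r addr0.
  - by apply/matrixP => x b; rewrite /B' /B !mxE eq_sym (negbTE (neq_lift _ _)).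
  - by apply/matrixP => x b; rewrite /B' /B !mxE eq_sym (negbTE (neq_lift _ _)).
have e2 : \det B = c' * \det B' + 0 * \det B'.
  apply: (determinant_multilinear (i0 := a')).
  - by apply/rowP => b; rewrite /B' /B !mxE eqxx eq_sym (negbTE naa) Ha' mul0r addr0.
  - by apply/matrixP => x b; rewrite /B' /B !mxE eq_sym (negbTE (neq_lift _ _)).
  - by apply/matrixP => x b; rewrite /B' /B !mxE eq_sym (negbTE (neq_lift _ _)).
have e3 : \det B' = 0.
  apply: (determinant_alternate naa) => b.
  by rewrite /B' /B !mxE eqxx (negbTE naa) eqxx.
by rewrite e1 e2 e3 !(mulr0, mul0r, addr0).
Qed.

Lemma det_two_dvd (F : fieldType) q (A : 'M[{poly F}]_q) a a' d :
  a != a' -> (forall b, d %| A a b) -> (forall b, d %| A a' b) ->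
  d * d %| \det A.
Proof.
move=> naa Ha Ha'; rewrite /determinant; apply: dvdp_sumP => s _.
apply: dvdp_mull; rewrite (bigD1 a) //= (bigD1 a') /=; last by rewrite eq_sym.
by rewrite mulrA dvdp_mulr // dvdp_mul.
Qed.


Lemma lift_max_widen p (a : 'I_p) : lift ord_max a = widen_ord (leqnSn p) a.
Proof. by apply: val_inj; rewrite /= /bump leqNgt ltn_ord. Qed.

Lemma step1 (F : fieldType) m n p k (U : 'M[{poly F}]_(m, n))
  (f0 : 'I_p -> 'I_m) (h : 'I_p -> 'I_n) (c0 : 'I_n) :
  (forall (f : 'I_p.+1 -> 'I_m) (g : 'I_p.+1 -> 'I_n), 'X^k %| \det (Mx U f g)) ->
  forall i c, 'X^k %| \det (Mx U f0 h) * U i c +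
    \sum_(a < p) cofactor (Mx U (ext f0 i) (ext h c0)) (lift ord_max a) ord_max
                 * U (f0 a) c.
Proof.
move=> H i c; have := H (ext f0 i) (ext h c).
rewrite (expand_det_col _ ord_max) big_ord_recr /= addrC.
have -> : cofactor (Mx U (ext f0 i) (ext h c)) ord_max ord_max = \det (Mx U f0 h).
  rewrite /cofactor -signr_odd addnn odd_double expr0 mul1r.
  by congr (\det _); apply/matrixP => a b; rewrite !mxE !ext_lift.
rewrite !mxE !ext_max mulrC.
congr (_ %| _ + _); apply: eq_bigr => a _.
rewrite -lift_max_widen !mxE !ext_lift ext_max mulrC; congr (_ * _).
rewrite /cofactor; congr (_ * \det _).
by apply/matrixP => x y; rewrite !mxE !ext_lift.
Qed.

Lemma core (F : fieldType) m n p k (U : 'M[{poly F}]_(m, n))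
  (f0 : 'I_p -> 'I_m) (h : 'I_p -> 'I_n) :
  (forall (f : 'I_p.+1 -> 'I_m) (g : 'I_p.+1 -> 'I_n), 'X^k %| \det (Mx U f g)) ->
  ~~ root (\det (Mx U f0 h)) 0 ->
  forall (j : 'I_p.+2 -> 'I_m) (g : 'I_p.+2 -> 'I_n),
    'X^(k + k) %| \det (Mx U j g).
Proof.
move=> H1 P0 j g.
set P := \det (Mx U f0 h).
pose c0 := g ord0.
pose C i a := cofactor (Mx U (ext f0 i) (ext h c0)) (lift ord_max a) ord_max.
pose E i c := P * U i c + \sum_(a < p) C i a * U (f0 a) c.
have HE i c : 'X^k %| E i c := @step1 _ _ _ _ _ U f0 h c0 H1 i c.
pose term (a : 'I_p.+2) (φ : 'I_p.+1) (b : 'I_p.+2) :=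
  if unlift ord0 φ is Some α then - (C (j a) α * U (f0 α) (g b))
  else E (j a) (g b).
have eM : P *: Mx U j g = \matrix_(a, b) \sum_(φ < p.+1) term a φ b.
  apply/matrixP => a b; rewrite !mxE big_ord_recl /term unlift_none.
  under eq_bigr => α _ do rewrite liftK.
  by rewrite /E sumrN addrK.
have : 'X^(k+k) %| \det (P *: Mx U j g).
  rewrite eM det_sum_rows; apply: dvdp_sumP => Φ _.
  set Z := [set a | Φ a == ord0].
  case: (boolP [exists a, exists a', [&& a != a', Φ a == Φ a' & Φ a != ord0]]).
    move=> /existsP [a /existsP [a' /and3P [naa /eqP eΦ nz]]].
    case: (unliftP ord0 (Φ a)) nz => [α eα|->]; last by rewrite eqxx.
    move=> _; rewrite (@det_two_prop _ _ _ a a' (- C (j a) α) (- C (j a') α)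
       (fun b => U (f0 α) (g b))) ?dvdp0 //.
      by move=> b; rewrite !mxE /term eα liftK mulNr.
    by move=> b; rewrite !mxE /term -eΦ eα liftK mulNr.
  move=> ne.
  have : (1 < #|Z|)%N.
    rewrite ltnNge; apply/negP => Z1.
    have inj : {in ~: Z &, injective Φ}.
      move=> a a'; rewrite !inE => na na' e; apply/eqP; apply/negPn/negP => naa.
      by apply: (negP ne); apply/existsP; exists a; apply/existsP; exists a'; rewrite naa e eqxx na'.
    have sub : (Φ @: (~: Z)) \subset [set~ ord0].
      by apply/subsetP => y /imsetP [a]; rewrite !inE => na ->.
    have := subset_leq_card sub; rewrite card_in_imset // cardsC1 card_ord /=.
    have := cardsC Z; rewrite card_ord.
    move: Z1; set x := #|Z|; set y := #|~: Z|; lia.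
  move=> /card_gt1P [a [a' [aZ a'Z naa]]].
  rewrite exprD; apply: (det_two_dvd naa) => b; rewrite mxE /term.
    by move: aZ; rewrite inE => /eqP ->; rewrite unlift_none.
  by move: a'Z; rewrite inE => /eqP ->; rewrite unlift_none.
rewrite detZ Gauss_dvdpr //.
apply: coprimep_expl; apply: coprimep_expr.
by rewrite coprimep_sym coprimepX.
Qed.


Lemma det_scaleX (F : fieldType) q (c : 'I_q -> 'I_q -> F) (e : 'I_q -> nat) :
  \det (\matrix_(a, b) ((c a b)%:P * 'X^(e a))) =
  (\det (\matrix_(a, b) c a b))%:P * 'X^(\sum_a e a).
Proof.
rewrite /determinant rmorph_sum mulr_suml; apply: eq_bigr => s _.
rewrite (eq_bigr (fun a => (c a (s a))%:P * 'X^(e a))); last by move=> a _; rewrite mxE.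
rewrite big_split /= -rmorph_prod -expr_sum rmorphM rmorph_sign mulrA.
by congr ((_ * _%:P) * _); apply: eq_bigr => a _; rewrite mxE.
Qed.

Lemma coef_det (F : fieldType) m n k (x : point F m n k) q
  (j : 'I_q -> 'I_m) (g : 'I_q -> 'I_n) w :
  (\det (Mx (Xt x) j g))`_w =
  \sum_(L : {ffun 'I_q -> 'I_k} | (\sum_(a < q) (L a : nat))%N == w)
     \det (\matrix_(a, b) x (L a) (j a) (g b)).
Proof.
have -> : Mx (Xt x) j g =
    \matrix_(a, b) \sum_(l < k) ((x l (j a) (g b))%:P * 'X^l).
  by apply/matrixP => a b; rewrite !mxE; apply: eq_bigr => l _; rewrite mul_polyC.
rewrite det_sum_rows coef_sum [RHS]big_mkcond /=; apply: eq_bigr => L _.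
rewrite (det_scaleX (fun a b => x (L a) (j a) (g b)) (fun a => (L a : nat))).
rewrite coefCM coefXn eq_sym; case: eqP => _; first by rewrite mulr1.
by rewrite mulr0.
Qed.

Lemma lowcoef_dvd (F : fieldType) k (q : {poly F}) :
  (forall l, (l < k)%N -> q`_l = 0) -> 'X^k %| q.
Proof.
move=> H; rewrite -(poly_take_drop k q).
have -> : take_poly k q = 0.
  by apply/polyP => i; rewrite coef_take_poly coef0; case: ifP => // /H.
by rewrite add0r dvdp_mull // dvdpp.
Qed.

Lemma dvd_coef (F : fieldType) K (q : {poly F}) w :
  'X^K %| q -> (w < K)%N -> q`_w = 0.
Proof. by move=> /divpK <- lt; rewrite coefMXn lt. Qed.

Lemma det_at0 (F : fieldType) m n k (x : point F m n k) q
  (f : 'I_q -> 'I_m) (h : 'I_q -> 'I_n) (l0 : 'I_k) : (l0 : nat) = 0%N ->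
  (\det (Mx (Xt x) f h)).[0] = \det (\matrix_(a, b) x l0 (f a) (h b)).
Proof.
move=> l00; rewrite -horner_evalE -det_map_mx; congr (\det _).
apply/matrixP => a b; rewrite !mxE rmorph_sum /=; under eq_bigr => i _ do rewrite horner_evalE.
rewrite (bigD1 l0) //= big1 ?addr0.
  by rewrite hornerZ hornerXn l00 expr0 mulr1.
move=> l nl; rewrite hornerZ hornerXn expr0n.
case: eqP => [l0e|]; last by rewrite mulr0.
by case/eqP: nl; apply: val_inj; rewrite /= l0e l00.
Qed.

Lemma gen_a (F : fieldType) p m n k (x : point F m n k) :
  inZ p.+1 x ->
  (exists (f0 : 'I_p -> 'I_m) (h : 'I_p -> 'I_n) (l0 : 'I_k),
     (l0 : nat) = 0%N /\ \det (\matrix_(a, b) x l0 (f0 a) (h b)) != 0) ->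
  forall w, (w < k + k)%N ->
  forall (j : 'I_p.+2 -> 'I_m) (g : 'I_p.+2 -> 'I_n),
  \sum_(L : {ffun 'I_p.+2 -> 'I_k} | (\sum_(a < p.+2) (L a : nat))%N == w)
     \det (\matrix_(a, b) x (L a) (j a) (g b)) = 0.
Proof.
move=> HZ [f0 [h [l0 [l00 nz]]]] w lw j g.
rewrite -coef_det; apply: (dvd_coef _ lw).
apply: (core (f0 := f0) (h := h)).
  apply: dvd_gen => f g' fi gi; apply: lowcoef_dvd => l lk.
  exact: HZ.
by rewrite /root (det_at0 _ _ _ l00).
Qed.


Unset Implicit Arguments.
Set Strict Implicit.

Lemma wedge_sum_eq (F : fieldType) m n k (x : point F m n k) q
  (j : 'I_q -> 'I_m) w :
  (forall g : 'I_q -> 'I_n,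
    \sum_(L : {ffun 'I_q -> 'I_k} | (\sum_(a < q) (L a : nat))%N == w)
     \det (\matrix_(a, b) x (L a) (j a) (g b)) = 0) ->
  \sum_(l : {ffun 'I_q -> 'I_k} | (\sum_(a < q) (l a : nat))%N == w)
          wedge (fun a : 'I_q => row (j a) (x (l a))) = 0.
Proof.
move=> H; apply/ffunP => g; rewrite sum_ffunE !ffunE.
under eq_bigr => L _ do rewrite /wedge ffunE.
case: (incr g); last by rewrite big1.
rewrite -[RHS](H g); apply: eq_bigr => L _; congr (\det _).
by apply/matrixP => a b; rewrite !mxE.
Qed.

Lemma part_a (F : closedFieldType) :
  (forall (r m n k : nat) (x : point F m n k),
     (2 <= r)%N -> (r <= m)%N -> (m <= n)%N -> (1 <= k)%N ->
     inZ r x ->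
     (exists (h0 : (r.-1 <= m)%N) (l0 : 'I_k), (l0 : nat) = 0%N /\
        wedge (fun a : 'I_r.-1 => row (widen_ord h0 a) (x l0)) != 0) ->
     forall (w : nat), (w < 2 * k)%N ->
     forall (j : 'I_r.+1 -> 'I_m), incr j ->
       \sum_(l : {ffun 'I_r.+1 -> 'I_k} | (\sum_(a < r.+1) (l a : nat))%N == w)
          wedge (fun a : 'I_r.+1 => row (j a) (x (l a))) = 0).
Proof.
move=> r m n k x r2 rm mn k1 HZ [h0 [l0 [l00 nz]]] w lw j ij.
have lw' : (w < k + k)%N by lia.
case: r r2 rm HZ h0 nz j ij => [|[|p]] // r2 rm HZ h0 nz j ij.
apply: wedge_sum_eq => g.
have [g0 hg] : exists g0, wedge (fun a => row (widen_ord h0 a) (x l0)) g0 != 0.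
  apply/existsP; rewrite -negb_forall; apply: contra nz => /forallP all.
  by apply/eqP/ffunP => g0; move/eqP: (all g0) => ->; rewrite ffunE.
move: hg; rewrite /wedge ffunE; case: ifP => [_ hdet|_]; last by rewrite eqxx.
apply: (gen_a HZ _ lw').
exists (fun a => widen_ord h0 a), (fun b => g0 b), l0; split => //.
by move: hdet; congr (\det _ != _); apply/matrixP => a b; rewrite !mxE.
Qed.

Lemma part_b (F : closedFieldType) :
  (forall (m n k : nat) (x : point F m n k),
     (3 <= m)%N -> (m <= n)%N -> (1 <= k)%N ->
     Z0 x ->
     forall (w : nat), (w < 2 * k)%N ->
     forall (j : 'I_3 -> 'I_m), incr j ->
       \sum_(l : {ffun 'I_3 -> 'I_k} | (\sum_(a < 3) (l a : nat))%N == w)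
          wedge (fun a : 'I_3 => row (j a) (x (l a))) = 0).
Proof.
move=> m n k x m3 mn k1 [HZ HC] w lw j ij.
have lw' : (w < k + k)%N by lia.
apply: wedge_sum_eq => g.
pose idx (l : 'I_k) (i : 'I_m) (c : 'I_n) : 'I_(k * (m * n)) :=
  mxvec_index l (mxvec_index i c).
pose pol : {mpoly F[k * (m * n)]} :=
  \sum_(L : {ffun 'I_3 -> 'I_k} | (\sum_(a < 3) (L a : nat))%N == w)
    \sum_(s : 'S_3) ((-1) ^+ s : F) *: \prod_(a < 3) 'X_(idx (L a) (j a) (g (s a))).
have ev : forall y : point F m n k, pol.@[flat y] =
   \sum_(L : {ffun 'I_3 -> 'I_k} | (\sum_(a < 3) (L a : nat))%N == w)
     \det (\matrix_(a, b) y (L a) (j a) (g b)).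
  move=> y; rewrite rmorph_sum; apply: eq_bigr => L _.
  rewrite rmorph_sum /determinant; apply: eq_bigr => s _.
  rewrite /= mevalZ rmorph_prod /=; congr (_ * _); apply: eq_bigr => a _.
  by rewrite mevalXU /flat /idx mxvecE mxE mxvecE !mxE.
rewrite -ev; apply: HC => y [HZy [l0 [i [c [l00 nz]]]]]; rewrite ev.
apply: (gen_a (p := 1) HZy _ lw').
exists (fun _ => i), (fun _ => c), l0; split => //.
by rewrite det_mx11 mxE.
Qed.


Theorem corollary4p4 (F : closedFieldType) :
  (forall (r m n k : nat) (x : point F m n k),
     (2 <= r)%N -> (r <= m)%N -> (m <= n)%N -> (1 <= k)%N ->
     inZ r x ->
     (exists (h0 : (r.-1 <= m)%N) (l0 : 'I_k), (l0 : nat) = 0%N /\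
        wedge (fun a : 'I_r.-1 => row (widen_ord h0 a) (x l0)) != 0) ->
     forall (w : nat), (w < 2 * k)%N ->
     forall (j : 'I_r.+1 -> 'I_m), incr j ->
       \sum_(l : {ffun 'I_r.+1 -> 'I_k} | (\sum_(a < r.+1) (l a : nat))%N == w)
          wedge (fun a : 'I_r.+1 => row (j a) (x (l a))) = 0)
  /\
  (forall (m n k : nat) (x : point F m n k),
     (3 <= m)%N -> (m <= n)%N -> (1 <= k)%N ->
     Z0 x ->
     forall (w : nat), (w < 2 * k)%N ->
     forall (j : 'I_3 -> 'I_m), incr j ->
       \sum_(l : {ffun 'I_3 -> 'I_k} | (\sum_(a < 3) (l a : nat))%N == w)
          wedge (fun a : 'I_3 => row (j a) (x (l a))) = 0).
Proof.
split; [exact: part_a | exact: part_b].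
Qed.
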